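(* Let $A\subset\mathbb{R}^n$ be a set-germ at $0$ with $0\in\overline{A}$, and let $h:(\mathbb{R}^n,0)\to(\mathbb{R}^n,0)$ be a bi-Lipschitz homeomorphism (germ). Then $D(h(A))\subset D(h(LD(A)))$. Moreover, if $A$ satisfies condition $(SSP)$, then $D(h(A))=D(h(LD(A)))$.
   Context: A bi-Lipschitz homeomorphism germ is a homeomorphism between neighbourhoods of $0$ fixing $0$ with $K_1|x-y|\le|h(x)-h(y)|\le K_2|x-y|$ for some $0<K_1\le K_2$ near $0$. Direction set: $D(X)=\{a\in S^{n-1} : \exists\, \{x_i\}\subset X\setminus\{0\},\ x_i\to 0,\ x_i/\|x_i\|\to a\}$; $LD(A)=\{ta : a\in D(A),\ t\ge0\}$. A set-germ $X$ with $0\in\overline{X}$ satisfies condition $(SSP)$ if for every sequence $\{a_m\}\subset\mathbb{R}^n$ with $a_m\to0$ and $\lim a_m/\|a_m\|\in D(X)$ there is a sequence $\{b_m\}\subset X$ with $\|a_m-b_m\|/\|a_m\|\to0$ and $\|a_m-b_m\|/\|b_m\|\to0$. *)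

(* Defs.v *)
(* points of R^n are row vectors 'rV[R]_n, R : realType. *)
From HB Require Import structures.
From mathcomp Require Import all_boot all_order all_algebra.
From mathcomp Require Import all_classical all_reals all_analysis.
Set Implicit Arguments. Unset Strict Implicit. Unset Printing Implicit Defensive.
Import Order.TTheory GRing.Theory Num.Theory.
Import numFieldNormedType.Exports.
Local Open Scope classical_set_scope.
Local Open Scope ring_scope.

Definition enorm {R : realType} {n : nat} (x : 'rV[R]_n) : R :=
  Num.sqrt (\sum_(i < n) (x ord0 i) ^+ 2).

(* Direction set D(X) (unit sphere for the Euclidean norm). Convergence uses the
   canonical topology of 'rV[R]_n, which is the Euclidean topology. *)
Definition dirset {R : realType} {n : nat} (X : set 'rV[R]_n) : set 'rV[R]_n :=
  [set a | enorm a = 1 /\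
    exists u : nat -> 'rV[R]_n,
      (forall i, X (u i) /\ u i != 0) /\
      u @ \oo --> (0 : 'rV[R]_n) /\
      (fun i => (enorm (u i))^-1 *: u i) @ \oo --> a].

Definition LD {R : realType} {n : nat} (A : set 'rV[R]_n) : set 'rV[R]_n :=
  [set x | exists t a, 0 <= t /\ dirset A a /\ x = t *: a].

Definition SSP {R : realType} {n : nat} (X : set 'rV[R]_n) : Prop :=
  forall a : nat -> 'rV[R]_n,
    (forall m, a m != 0) ->
    a @ \oo --> (0 : 'rV[R]_n) ->
    (exists l, dirset X l /\ (fun m => (enorm (a m))^-1 *: a m) @ \oo --> l) ->
    exists b : nat -> 'rV[R]_n,
      (forall m, X (b m)) /\
      (fun m => enorm (a m - b m) / enorm (a m)) @ \oo --> (0 : R) /\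
      (fun m => enorm (a m - b m) / enorm (b m)) @ \oo --> (0 : R).

Definition bilip_homeo_germ {R : realType} {n : nat}
    (h : 'rV[R]_n -> 'rV[R]_n) (U : set 'rV[R]_n) : Prop :=
  [/\ open U, U 0, h 0 = 0, open (h @` U) &
   [/\ (forall x y, U x -> U y -> h x = h y -> x = y),
       {within U, continuous h},
       (exists g : 'rV[R]_n -> 'rV[R]_n,
          (forall x, U x -> g (h x) = x) /\ {within h @` U, continuous g}) &
       (exists r K1 K2 : R, [/\ 0 < r, 0 < K1, K1 <= K2,
          (forall x, enorm x < r -> U x) &
          (forall x y, enorm x < r -> enorm y < r ->
             K1 * enorm (x - y) <= enorm (h x - h y) /\
             enorm (h x - h y) <= K2 * enorm (x - y))])]].

(* Main.v *)
Require Import Defs.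
From HB Require Import structures.
From mathcomp Require Import all_boot all_order all_algebra.
From mathcomp Require Import all_classical all_reals all_analysis.
From mathcomp Require Import ring lra.
Import Order.TTheory GRing.Theory Num.Theory.
Import numFieldNormedType.Exports.
Local Open Scope classical_set_scope.
Local Open Scope ring_scope.
Set Implicit Arguments. Unset Strict Implicit. Unset Printing Implicit Defensive.
Section EN.
Variables (R : realType) (n : nat).
Implicit Types x y : 'rV[R]_n.

Lemma sum_sq_ge0 x : 0 <= \sum_(i < n) (x ord0 i) ^+ 2.
Proof. by apply: sumr_ge0 => i _; apply: sqr_ge0. Qed.

Lemma enorm_sq x : enorm x ^+ 2 = \sum_(i < n) (x ord0 i) ^+ 2.
Proof. by rewrite /enorm sqr_sqrtr // sum_sq_ge0. Qed.

Lemma enorm_ge0 x : 0 <= enorm x.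
Proof. exact: sqrtr_ge0. Qed.

Lemma enormZ (c : R) x : enorm (c *: x) = `|c| * enorm x.
Proof.
rewrite /enorm (eq_bigr (fun i => c ^+ 2 * (x ord0 i) ^+ 2)); last first.
  by move=> i _; rewrite mxE exprMn.
by rewrite -mulr_sumr sqrtrM ?sqr_ge0 // sqrtr_sqr.
Qed.

Lemma enormN x : enorm (- x) = enorm x.
Proof. by rewrite -scaleN1r enormZ normrN normr1 mul1r. Qed.

Lemma enorm0 : enorm (0 : 'rV[R]_n) = 0.
Proof. by rewrite -(scale0r (0 : 'rV[R]_n)) enormZ normr0 mul0r. Qed.

Lemma coord_le x i : `|x ord0 i| <= enorm x.
Proof.
rewrite -(ger0_norm (enorm_ge0 x)) -ler_sqr ?normr_ge0 // !real_normK ?num_real //.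
rewrite enorm_sq (bigD1 i) //= lerDl; apply: sumr_ge0 => j _; apply: sqr_ge0.
Qed.

Lemma enorm_eq0 x : enorm x = 0 -> x = 0.
Proof.
move=> h; apply/rowP => i; rewrite mxE; apply/eqP; rewrite -normr_le0 -h.
exact: coord_le.
Qed.

Lemma mxnorm_le x : `|x| <= enorm x.
Proof.
change (mx_norm x <= enorm x); rewrite mx_normrE.
apply/bigmax_leP; split; first exact: enorm_ge0.
by move=> [i j] _ /=; rewrite (ord1 i); apply: coord_le.
Qed.

Lemma coord_le_mx x i : `|x ord0 i| <= `|x|.
Proof.
change (`|x ord0 i| <= mx_norm x); rewrite mx_normrE.
exact: (le_bigmax _ (fun ij : 'I_1 * 'I_n => `|x ij.1 ij.2|) (ord0, i)).
Qed.

Lemma enorm_le_mx x : enorm x <= n%:R * `|x|.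
Proof.
rewrite -(ger0_norm (enorm_ge0 x)) -[X in _ <= X]ger0_norm ?mulr_ge0 ?normr_ge0 //.
rewrite -ler_sqr ?normr_ge0 // !real_normK ?num_real // enorm_sq.
apply: (@le_trans _ _ (\sum_(i < n) `|x| ^+ 2)).
  apply: ler_sum => i _; rewrite -real_normK ?num_real //.
  by rewrite ler_sqr ?nnegrE ?normr_ge0 ?coord_le_mx.
rewrite sumr_const card_ord exprMn -[_ *+ n]mulr_natl; apply: ler_wpM2r; first exact: sqr_ge0.
have : (n%:R <= n%:R ^+ 2 :> R).
  case: (n) => [|m]; first by rewrite expr0n.
  by rewrite expr2 ler_peMl // ler1n.
done.
Qed.

Lemma enorm_cs x y : \sum_(i < n) x ord0 i * y ord0 i <= enorm x * enorm y.
Proof.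
set a := enorm x; set b := enorm y.
have a0 : 0 <= a by apply: enorm_ge0.
have b0 : 0 <= b by apply: enorm_ge0.
have [az|ap] := eqVneq a 0.
  by rewrite big1 ?mulr_ge0 // => i _; rewrite (enorm_eq0 az) mxE mul0r.
have [bz|bp] := eqVneq b 0.
  by rewrite big1 ?mulr_ge0 // => i _; rewrite (enorm_eq0 bz) mxE mulr0.
have abp : 0 < a * b by rewrite mulr_gt0 // lt0r ?ap ?bp.
have key : (a * b) * (2 * \sum_(i < n) x ord0 i * y ord0 i) <=
   2 * (a * b) ^+ 2.
  rewrite mulr_sumr mulr_sumr.
  apply: (@le_trans _ _ (\sum_(i < n) (b ^+ 2 * x ord0 i ^+ 2 + a ^+ 2 * y ord0 i ^+ 2))).
    apply: ler_sum => i _.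
    have := sqr_ge0 (b * x ord0 i - a * y ord0 i); nra.
  rewrite big_split /= -!mulr_sumr -!enorm_sq -/a -/b; nra.
nra.
Qed.

Lemma enormD x y : enorm (x + y) <= enorm x + enorm y.
Proof.
rewrite -(ger0_norm (enorm_ge0 (x + y))) -[X in _ <= X]ger0_norm ?addr_ge0 ?enorm_ge0 //.
rewrite -ler_sqr ?normr_ge0 // !real_normK ?num_real // enorm_sq.
rewrite (eq_bigr (fun i => x ord0 i ^+ 2 + y ord0 i ^+ 2 + 2 * (x ord0 i * y ord0 i))); last first.
  by move=> i _; rewrite mxE sqrrD; ring.
rewrite !big_split /= -!enorm_sq -mulr_sumr.
have := enorm_cs x y; nra.
Qed.

Lemma enormB_ge x y : enorm x - enorm y <= enorm (x - y).
Proof.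
have := enormD (x - y) y; rewrite subrK; lra.
Qed.

Lemma enormBC x y : enorm (x - y) = enorm (y - x).
Proof. by rewrite -enormN opprB. Qed.

End EN.
Definition ev (P : nat -> Prop) := exists N, forall i, (N <= i)%N -> P i.

Lemma evP (P : nat -> Prop) : (\forall n \near \oo, P n) <-> ev P.
Proof.
split; first by case=> N _ H; exists N => n /H.
by case=> N H; exists N => // n /H.
Qed.

Lemma ev_and P Q : ev P -> ev Q -> ev (fun i => P i /\ Q i).
Proof.
move=> [N1 H1] [N2 H2]; exists (maxn N1 N2) => i; rewrite geq_max => /andP[a b].
by split; [apply: H1|apply: H2].
Qed.

Lemma ev_impl (P Q : nat -> Prop) : ev P -> (forall i, P i -> Q i) -> ev Q.
Proof. by move=> [N H] PQ; exists N => i /H /PQ. Qed.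

Lemma ev_shift P N : ev P -> ev (fun i => P (i + N)%N).
Proof. by move=> [M H]; exists M => i Hi; apply: H; rewrite (leq_trans Hi) // leq_addr. Qed.

Lemma ev_sub P (phi : nat -> nat) : (forall k, (k <= phi k)%N) -> ev P -> ev (fun k => P (phi k)).
Proof. by move=> Hp [M H]; exists M => i Hi; apply: H; apply: leq_trans Hi (Hp i). Qed.

Lemma ev_inv (R : realType) (e : R) : 0 < e -> ev (fun k => k.+1%:R^-1 < e).
Proof.
move=> e0; have ie : 0 <= e^-1 by rewrite invr_ge0 ltW.
have := archi_boundP ie; set N := Num.Def.archi_bound _ => HN.
exists N => k Hk.
rewrite -(invrK e) ltf_pV2 ?posrE ?invr_gt0 //.
apply: lt_le_trans HN _; rewrite ler_nat; apply: leq_trans Hk _; exact: leqnSn.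
Qed.

Section CV.
Variables (R : realType) (n : nat).

Lemma cvgE (u : nat -> 'rV[R]_n) (l : 'rV[R]_n) :
  u @ \oo --> l <-> forall e : R, 0 < e -> ev (fun i => enorm (u i - l) < e).
Proof.
split.
  move/cvgrPdist_lt => H e e0.
  have e1 : 0 < e / (n%:R + 1) by rewrite divr_gt0 // ltr_wpDl.
  have := H _ e1; move/evP => Hev; apply: (ev_impl Hev) => i Hi.
  apply: le_lt_trans (enorm_le_mx (u i - l)) _.
  rewrite distrC in Hi.
  have Hn : 0 <= `|u i - l| by apply: normr_ge0.
  have Hn1 : n%:R * `|u i - l| <= (n%:R + 1) * `|u i - l| by rewrite ler_wpM2r // lerDl.
  apply: le_lt_trans Hn1 _; rewrite mulrC -ltr_pdivlMr ?ltr_wpDl //.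
move=> H; apply/cvgrPdist_lt => e e0; apply/evP.
apply: (ev_impl (H e e0)) => i Hi; rewrite distrC.
exact: le_lt_trans (mxnorm_le _) Hi.
Qed.

Lemma cvgRE (f : nat -> R) :
  f @ \oo --> (0:R) <-> forall e : R, 0 < e -> ev (fun i => `|f i| < e).
Proof.
split.
  move/cvgrPdist_lt => H e e0; have := H _ e0; move/evP => Hev; apply: (ev_impl Hev) => i.
  by rewrite sub0r normrN.
move=> H; apply/cvgrPdist_lt => e e0; apply/evP.
by apply: (ev_impl (H e e0)) => i; rewrite sub0r normrN.
Qed.

End CV.
Section DIR.
Variables (R : realType) (n : nat).
Implicit Types x y p q : 'rV[R]_n.
Definition dir x := (enorm x)^-1 *: x.

Lemma enorm_gt0 x : x != 0 -> 0 < enorm x.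
Proof.
move=> xn; rewrite lt0r enorm_ge0 andbT; apply/eqP => /enorm_eq0 h.
by rewrite h eqxx in xn.
Qed.

Lemma enorm_dir x : x != 0 -> enorm (dir x) = 1.
Proof.
move=> /enorm_gt0 h; rewrite /dir enormZ ger0_norm ?invr_ge0 ?ltW //.
by rewrite mulVf // gt_eqF.
Qed.

Lemma enorm_dist x y : `|enorm x - enorm y| <= enorm (x - y).
Proof.
rewrite ler_norml enormB_ge andbT.
have := enormB_ge y x; rewrite enormBC; lra.
Qed.

Lemma dir_lip p q : p != 0 -> q != 0 ->
  enorm (dir q - dir p) <= 2 * enorm (q - p) / enorm p.
Proof.
move=> /enorm_gt0 hp /enorm_gt0 hq.
have -> : dir q - dir p = ((enorm q)^-1 - (enorm p)^-1) *: q + (enorm p)^-1 *: (q - p).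
  by rewrite /dir scalerBl scalerBr addrA subrK.
apply: le_trans (enormD _ _) _.
rewrite !enormZ [`|(enorm p)^-1|]ger0_norm ?invr_ge0 ?(ltW hp) //.
have e1 : `|(enorm q)^-1 - (enorm p)^-1| * enorm q = `|enorm p - enorm q| / enorm p.
  have ee : ((enorm q)^-1 - (enorm p)^-1) * enorm q = (enorm p - enorm q) / enorm p.
    by field; rewrite !gt_eqF.
  rewrite -[X in _ * X](ger0_norm (ltW hq)) -normrM ee normrM normfV.
  by rewrite (ger0_norm (ltW hp)).
rewrite e1.
have h : `|enorm p - enorm q| / enorm p <= enorm (q - p) / enorm p.
  by rewrite ler_wpM2r ?invr_ge0 ?(ltW hp) // -enormBC enorm_dist.
rewrite -mulrA [X in _ + X <= _]mulrC.
set z := enorm (q - p) / enorm p in h *.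
lra.
Qed.

End DIR.
Section TR.
Variables (R : realType) (n : nat).
Implicit Types x y p q : 'rV[R]_n.

Lemma transfer (h : 'rV[R]_n -> 'rV[R]_n) (U Y : set 'rV[R]_n) (r K1 K2 : R)
  (x y : nat -> 'rV[R]_n) (a : 'rV[R]_n) :
  0 < r -> 0 < K1 -> K1 <= K2 -> h 0 = 0 ->
  (forall x, enorm x < r -> U x) ->
  (forall x y, enorm x < r -> enorm y < r ->
     K1 * enorm (x - y) <= enorm (h x - h y) /\
     enorm (h x - h y) <= K2 * enorm (x - y)) ->
  enorm a = 1 ->
  (forall i, x i != 0) ->
  (forall e, 0 < e -> ev (fun i => enorm (x i) < e)) ->
  (forall e, 0 < e -> ev (fun i => enorm (dir (h (x i)) - a) < e)) ->
  (forall i, Y (y i)) ->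
  (forall e, 0 < e -> ev (fun i => enorm (x i - y i) / enorm (x i) < e)) ->
  dirset (h @` (Y `&` U)) a.
Proof.
move=> r0 K10 K12 h0 Hball Hlip a1 xn0 xcv dcv Yy rcv.
have K20 : 0 < K2 by apply: lt_le_trans K12.
have [N0 HN0] := ev_and (xcv _ (divr_gt0 r0 (ltr0n _ 2))) (rcv _ (divr_gt0 ltr01 (ltr0n _ 2))).
pose x' i := x (i + N0)%N; pose y' i := y (i + N0)%N.
have Hx' : forall i, 0 < enorm (x' i) /\ enorm (x' i) < r / 2 /\
    enorm (x' i - y' i) < enorm (x' i) / 2.
  move=> i; have [h1 h2] := HN0 (i + N0)%N (leq_addl _ _).
  have ex0 := enorm_gt0 (xn0 (i + N0)%N).
  split; first exact: ex0.
  split; first exact: h1.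
  move: h2; rewrite ltr_pdivrMr // /x' /y'; lra.
have Hy : forall i, 0 < enorm (y' i) /\ enorm (y' i) < r /\
    enorm (y' i) <= 3 / 2 * enorm (x' i).
  move=> i; have [h1 [h2 h3]] := Hx' i.
  have h4 := enormB_ge (x' i) (y' i).
  have h5 := enormB_ge (y' i) (x' i); rewrite enormBC in h5.
  split; [lra|split; lra].
have Hxr : forall i, enorm (x' i) < r by move=> i; have [_ [h2 _]] := Hx' i; lra.
have Hyr : forall i, enorm (y' i) < r by move=> i; have [_ [h2 _]] := Hy i.
have e00 : enorm (0 : 'rV[R]_n) < r by rewrite enorm0.
have Hn : forall z, enorm z < r -> K1 * enorm z <= enorm (h z) /\ enorm (h z) <= K2 * enorm z.
  by move=> z zr; have := Hlip z 0 zr e00; rewrite h0 !subr0.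
have yn0 : forall i, y' i != 0.
  by move=> i; apply/eqP => e; have [h1 _] := Hy i; rewrite e enorm0 ltxx in h1.
have hyn0 : forall i, h (y' i) != 0.
  move=> i; apply/eqP => e; have [h1 _] := Hn _ (Hyr i); rewrite e enorm0 in h1.
  have := enorm_gt0 (yn0 i) => h2; have : 0 < K1 * enorm (y' i) by apply: mulr_gt0.
  lra.
have hxn0 : forall i, h (x' i) != 0.
  move=> i; apply/eqP => e; have [h1 _] := Hn _ (Hxr i); rewrite e enorm0 in h1.
  have := enorm_gt0 (xn0 (i + N0)%N) => h2; have : 0 < K1 * enorm (x' i) by apply: mulr_gt0.
  rewrite /x'; lra.
split; first by [].
exists (fun i => h (y' i)); split; [|split].
- by move=> i; split; [exists (y' i); [split; [apply: Yy|apply: Hball]|]|].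
- apply/cvgE => e e0.
  have := ev_shift N0 (xcv _ (divr_gt0 e0 (mulr_gt0 K20 (ltr0n _ 2)))).
  move=> H; apply: (ev_impl H) => i Hi; rewrite subr0.
  have [_ h2] := Hn _ (Hyr i); have [_ [_ h3]] := Hy i.
  have : K2 * enorm (y' i) <= K2 * (3 / 2 * enorm (x' i)) by rewrite ler_wpM2l // ltW.
  move: Hi; rewrite ltr_pdivlMr ?mulr_gt0 // -/(x' i) => Hi.
  nra.
apply/cvgE => e e0.
have c1 : 0 < e * K1 / (4 * K2) by rewrite divr_gt0 ?mulr_gt0.
have H := ev_and (ev_shift N0 (rcv _ c1)) (ev_shift N0 (dcv _ (divr_gt0 e0 (ltr0n _ 2)))).
apply: (ev_impl H) => i [Hi1 Hi2]; rewrite -/(x' i) -/(y' i) in Hi1 Hi2.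
change (enorm (dir (h (y' i)) - a) < e).
have -> : dir (h (y' i)) - a = (dir (h (y' i)) - dir (h (x' i))) + (dir (h (x' i)) - a).
  by rewrite addrA subrK.
apply: le_lt_trans (enormD _ _) _.
have d1 := dir_lip (hxn0 i) (hyn0 i).
have [_ d2] := Hlip _ _ (Hyr i) (Hxr i); rewrite [enorm (y' i - x' i)]enormBC in d2.
have [d3 _] := Hn _ (Hxr i).
have ex0 : 0 < enorm (x' i) by have [] := Hx' i.
set t := enorm (x' i - y' i) in Hi1 d2.
set q := enorm (h (y' i) - h (x' i)) in d1 d2.
set P := enorm (h (x' i)) in d1 d3.
set ex := enorm (x' i) in Hi1 d3 ex0.
have P0 : 0 < P by apply: lt_le_trans d3; apply: mulr_gt0.
have k1 : t < e * K1 / (4 * K2) * ex by rewrite -ltr_pdivrMr.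
have k2 : 2 * q / P < e / 2.
  rewrite ltr_pdivrMr //.
  have : 4 * K2 * t < e * K1 * ex.
    move: k1; rewrite -mulrA [_^-1 * _]mulrC mulrA ltr_pdivlMr ?mulr_gt0 // => k1.
    by rewrite mulrC.
  have : e * (K1 * ex) <= e * P by rewrite ler_wpM2l // ltW.
  move=> k3 k4; lra.
lra.
Qed.
End TR.
Lemma x_to_0 (R : realType) (n : nat) (g h : 'rV[R]_n -> 'rV[R]_n) (U : set 'rV[R]_n)
  (x : nat -> 'rV[R]_n) :
  {within h @` U, continuous g} -> (forall z, U z -> g (h z) = z) -> U 0 -> h 0 = 0 ->
  (forall i, U (x i)) -> (fun i => h (x i)) @ \oo --> (0 : 'rV[R]_n) -> x @ \oo --> (0 : 'rV[R]_n).
Proof.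
move=> gc gh U0 h0 Ux hx.
have g0 : g 0 = 0 by rewrite -{1}h0 gh.
have B0 : (h @` U) 0 by exists 0.
have := (proj1 (subspace_continuousP _ g) gc) 0 B0; rewrite g0 => gc0.
have Hw : (fun i => h (x i)) @ \oo --> within (h @` U) (nbhs (0 : 'rV[R]_n)).
  move=> P HP.
  have HP' : nbhs (0 : 'rV[R]_n) [set z | (h @` U) z -> P z] := HP.
  have H : \forall i \near \oo, (h @` U) (h (x i)) -> P (h (x i)) := hx _ HP'.
  change (\forall i \near \oo, P (h (x i))).
  apply: (filterS _ H) => i /= Hi; apply: Hi.
  by exists (x i).
have -> : x = (fun i => g (h (x i))) by apply: funext => i; rewrite gh.
exact: cvg_trans (cvg_app g Hw) gc0.
Qed.
Section CPT.
Variables (R : realType) (n : nat).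

Lemma ball_enorm (p : 'rV[R]_n) (e : R) : 0 < e ->
  exists B, nbhs p B /\ forall w, B w -> enorm (w - p) < e.
Proof.
move=> e0; have e1 : 0 < e / (n%:R + 1) by rewrite divr_gt0 // ltr_wpDl.
exists (ball p (e / (n%:R + 1))); split; first exact: nbhsx_ballx.
move=> w; rewrite -ball_normE /= distrC => Hw.
apply: le_lt_trans (enorm_le_mx (w - p)) _.
have Hn : 0 <= `|w - p| by apply: normr_ge0.
have Hn1 : n%:R * `|w - p| <= (n%:R + 1) * `|w - p| by rewrite ler_wpM2r // lerDl.
apply: le_lt_trans Hn1 _; rewrite mulrC -ltr_pdivlMr ?ltr_wpDl //.
Qed.

Lemma sphere_compact : compact [set w : 'rV[R]_n | enorm w = 1].
Proof.
apply: bounded_closed_compact.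
  exists 1; split; first exact: num_real.
  move=> M M1 w Sw /=; apply: le_trans (mxnorm_le w) _; rewrite Sw; exact: ltW.
move=> p /= Hp; apply/eqP; rewrite -subr_eq0 -normr_le0; apply/ler_addgt0Pl => e e0; rewrite addr0.
have [B [HB HBe]] := ball_enorm p e0.
have [w [/= Sw Bw]] := Hp B HB.
have := HBe _ Bw; have := enorm_dist p w; rewrite Sw enormBC => h1 h2.
apply: ltW; exact: le_lt_trans h1 h2.
Qed.

Lemma sphere_cluster (v : nat -> 'rV[R]_n) : (forall i, enorm (v i) = 1) ->
  exists d, enorm d = 1 /\ exists phi : nat -> nat,
    (forall k, (k <= phi k)%N) /\ forall k, enorm (v (phi k) - d) < k.+1%:R^-1.
Proof.
move=> Sv.
have FS : (v @ \oo) [set w : 'rV[R]_n | enorm w = 1] by exists 0%N => // i _; exact: Sv.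
have [d [Sd Cd]] := sphere_compact _ FS.
exists d; split; first exact: Sd.
have H : forall k, exists i, (k <= i)%N /\ enorm (v i - d) < k.+1%:R^-1.
  move=> k; have kp : 0 < (k.+1%:R : R)^-1 by rewrite invr_gt0 ltr0Sn.
  have [B [HB HBe]] := ball_enorm d kp.
  have FA : (v @ \oo) (v @` [set i | (k <= i)%N]) by exists k => // i Hi; exists i.
  have [w [[i Hi <-] Bw]] := Cd _ _ FA HB.
  by exists i; split; [|apply: HBe].
have [phi Hphi] := choice H.
by exists phi; split => k; have [] := Hphi k.
Qed.
End CPT.
Section DC.
Variables (R : realType) (n : nat).

Lemma dirset_pt (A : set 'rV[R]_n) a (e : R) : dirset A a -> 0 < e ->
  exists w, A w /\ w != 0 /\ enorm w < e /\ enorm (dir w - a) < e.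
Proof.
move=> [_ [u [Hu [u0 ua]]]] e0.
have H1 := (proj1 (cvgE _ _) u0) e e0.
have H2 := (proj1 (cvgE _ _) ua) e e0.
have [N HN] := ev_and H1 H2.
have [h1 h2] := HN N (leqnn N).
have [Au un] := Hu N.
by exists (u N); split; [|split; [|split]] => //; rewrite subr0 in h1.
Qed.

Lemma dirset_closed (A : set 'rV[R]_n) (dk : nat -> 'rV[R]_n) d :
  (forall k, dirset A (dk k)) -> enorm d = 1 ->
  (forall e, 0 < e -> ev (fun k => enorm (dk k - d) < e)) -> dirset A d.
Proof.
move=> Hd d1 dcv.
have H : forall k, exists w, A w /\ w != 0 /\ enorm w < k.+1%:R^-1 /\
    enorm (dir w - dk k) < k.+1%:R^-1.
  move=> k; apply: dirset_pt (Hd k) _; by rewrite invr_gt0 ltr0Sn.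
have [w Hw] := choice H.
split; first exact: d1.
exists w; split; [|split].
- by move=> i; have [? [? _]] := Hw i.
- apply/cvgE => e e0; apply: (ev_impl (ev_inv e0)) => k Hk.
  have [_ [_ [h _]]] := Hw k; rewrite subr0; exact: lt_trans h Hk.
- apply/cvgE => e e0.
  have e2 : 0 < e / 2 by rewrite divr_gt0.
  have H2 := ev_and (ev_inv e2) (dcv _ e2).
  apply: (ev_impl H2) => k [Hk1 Hk2].
  change (enorm (dir (w k) - d) < e).
  have -> : dir (w k) - d = (dir (w k) - dk k) + (dk k - d) by rewrite addrA subrK.
  apply: le_lt_trans (enormD _ _) _.
  have [_ [_ [_ h]]] := Hw k.
  have := lt_trans h Hk1; lra.
Qed.
End DC.
Lemma extract (R : realType) (n : nat) (X U : set 'rV[R]_n) (h g : 'rV[R]_n -> 'rV[R]_n) a :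
  {within h @` U, continuous g} -> (forall z, U z -> g (h z) = z) -> U 0 -> h 0 = 0 ->
  dirset (h @` (X `&` U)) a ->
  enorm a = 1 /\ exists x : nat -> 'rV[R]_n,
    (forall i, X (x i) /\ U (x i) /\ x i != 0) /\
    (forall e, 0 < e -> ev (fun i => enorm (x i) < e)) /\
    (forall e, 0 < e -> ev (fun i => enorm (dir (h (x i)) - a) < e)).
Proof.
move=> gc gh U0 h0 [a1 [u [Hu [u0 ua]]]]; split; first exact: a1.
have H : forall i, exists z, (X `&` U) z /\ h z = u i.
  by move=> i; have [[z Hz <-] _] := Hu i; exists z.
have [x Hx] := choice H.
have ue : u = (fun i => h (x i)) by apply: funext => i; have [_ ->] := Hx i.
rewrite ue in u0 ua Hu.
exists x; split; [|split].
- move=> i; have [[Xi Ui] _] := Hx i; split => //; split => //.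
  apply/eqP => e; have [_ hn] := Hu i; by rewrite e h0 eqxx in hn.
- have := x_to_0 gc gh U0 h0 (fun i => proj2 (proj1 (Hx i))) u0.
  move/cvgE => H0 e e0; apply: (ev_impl (H0 e e0)) => i; by rewrite subr0.
- exact: (proj1 (cvgE _ _) ua).
Qed.
Unset Implicit Arguments.

Theorem lemma5p6 (R : realType) (n : nat) (A : set 'rV[R]_n)
    (h : 'rV[R]_n -> 'rV[R]_n) (U : set 'rV[R]_n) :
  closure A 0 ->
  bilip_homeo_germ h U ->
  dirset (h @` (A `&` U)) `<=` dirset (h @` (LD A `&` U)) /\
  (SSP A -> dirset (h @` (A `&` U)) = dirset (h @` (LD A `&` U))).
Proof.
move=> _ [Uo U0 h0 hUo [hinj hc [g [gh gc]] [r [K1 [K2 [r0 K10 K12 Hball Hlip]]]]]].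
have part1 : dirset (h @` (A `&` U)) `<=` dirset (h @` (LD A `&` U)).
  move=> a Ha.
  have [a1 [x [Hx [xcv dcv]]]] := extract gc gh U0 h0 Ha.
  have xn0 : forall i, x i != 0 by move=> i; have [_ []] := Hx i.
  have [d [d1 [phi [Hphi Hd]]]] := sphere_cluster (fun i => enorm_dir (xn0 i)).
  have dA : dirset A d.
    split; first exact: d1.
    exists (fun k => x (phi k)); split; [|split].
    - by move=> k; have [? [? ?]] := Hx (phi k).
    - apply/cvgE => e e0; apply: (ev_impl (ev_sub Hphi (xcv e e0))) => k; by rewrite subr0.
    - apply/cvgE => e e0; apply: (ev_impl (ev_inv e0)) => k Hk.
      exact: lt_trans (Hd k) Hk.
  apply: (@transfer R n h U (LD A) r K1 K2 (fun k => x (phi k))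
     (fun k => enorm (x (phi k)) *: d) a r0 K10 K12 h0 Hball Hlip a1).
  - by move=> k; apply: xn0.
  - by move=> e e0; apply: ev_sub Hphi (xcv e e0).
  - by move=> e e0; apply: ev_sub Hphi (dcv e e0).
  - by move=> k; exists (enorm (x (phi k))), d; split; [apply: enorm_ge0|split].
  - move=> e e0; apply: (ev_impl (ev_inv e0)) => k Hk.
    have ex0 := enorm_gt0 (xn0 (phi k)).
    have -> : x (phi k) - enorm (x (phi k)) *: d = enorm (x (phi k)) *: (dir (x (phi k)) - d).
      by rewrite scalerBr /dir scalerA mulfV ?gt_eqF // scale1r.
    rewrite enormZ ger0_norm ?ltW // mulrC mulrA mulVf ?gt_eqF // mul1r.
    exact: lt_trans (Hd k) Hk.
split; first exact: part1.
move=> ssp; apply/seteqP; split; first exact: part1.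
move=> a Ha.
have [a1 [x [Hx [xcv dcv]]]] := extract gc gh U0 h0 Ha.
have xn0 : forall i, x i != 0 by move=> i; have [_ []] := Hx i.
have H : forall i, exists p : R * 'rV[R]_n, 0 <= p.1 /\ dirset A p.2 /\ x i = p.1 *: p.2.
  by move=> i; have [[t [b [t0 [Hb ->]]]] _] := Hx i; exists (t, b).
have [tp Htp] := choice H.
have dn1 : forall i, enorm (tp i).2 = 1 by move=> i; have [_ [Hd _]] := Htp i; exact: (proj1 Hd).
have dirx : forall i, dir (x i) = (tp i).2.
  move=> i; have [t0 [_ xe]] := Htp i.
  have tn0 : (tp i).1 != 0 by apply/eqP => e; have := xn0 i; rewrite xe e scale0r eqxx.
  by rewrite /dir xe enormZ dn1 mulr1 ger0_norm // scalerA mulVf // scale1r.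
have [d [d1 [phi [Hphi Hd]]]] := sphere_cluster dn1.
have dA : dirset A d.
  apply: (dirset_closed (dk := fun k => (tp (phi k)).2)) => //.
  - by move=> k; have [_ [] ] := Htp (phi k).
  - by move=> e e0; apply: (ev_impl (ev_inv e0)) => k Hk; exact: lt_trans (Hd k) Hk.
have acv : (fun k => x (phi k)) @ \oo --> (0 : 'rV[R]_n).
  apply/cvgE => e e0; apply: (ev_impl (ev_sub Hphi (xcv e e0))) => k; by rewrite subr0.
have adir : exists l, dirset A l /\
    (fun m => (enorm (x (phi m)))^-1 *: x (phi m)) @ \oo --> l.
  exists d; split; first exact: dA.
  apply/cvgE => e e0; apply: (ev_impl (ev_inv e0)) => k Hk.
  change (enorm (dir (x (phi k)) - d) < e); rewrite dirx.
  exact: lt_trans (Hd k) Hk.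
have [b [Ab [bcv _]]] := ssp (fun k => x (phi k)) (fun k => xn0 (phi k)) acv adir.
apply: (@transfer R n h U A r K1 K2 (fun k => x (phi k)) b a r0 K10 K12 h0 Hball Hlip a1).
- by move=> k; apply: xn0.
- by move=> e e0; apply: ev_sub Hphi (xcv e e0).
- by move=> e e0; apply: ev_sub Hphi (dcv e e0).
- exact: Ab.
- move=> e e0; apply: (ev_impl ((proj1 (cvgRE _)) bcv e e0)) => k.
  by rewrite ger0_norm // divr_ge0 // enorm_ge0.
Qed.
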